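(* Every semifilter $\mathcal{S}$ (viewed as a subspace of $2^\omega$) is homogeneous.
   Context: A semifilter (on $\omega$) is a collection $\mathcal{S}\subseteq\mathcal{P}(\omega)$ such that $\varnothing\notin\mathcal{S}$, $\omega\in\mathcal{S}$, $\mathcal{S}$ is closed under finite modifications (if $x\in\mathcal{S}$ and $y\subseteq\omega$ with $(x\setminus y)\cup(y\setminus x)$ finite then $y\in\mathcal{S}$), and $\mathcal{S}$ is upward-closed. Subsets of $\mathcal{P}(\omega)$ are identified via characteristic functions with subspaces of $2^\omega$. A space $X$ is homogeneous if for all $x,y\in X$ there is a homeomorphism $h:X\to X$ with $h(x)=y$. *)

(* Defs.v *)
(* Subsets of omega are identified with their characteristic
   functions nat -> bool (points of the Cantor space 2^omega); a collection
   of subsets of omega is a predicate on (nat -> bool). *)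
From Stdlib Require Import Arith.

Definition cantor := nat -> bool.

Definition agree (n : nat) (x y : cantor) : Prop :=
  forall i, i < n -> x i = y i.

(* U is (relatively) open in the subspace S of 2^omega with the product
   topology: U ∩ S is a union of traces on S of basic open sets. *)
Definition rel_open (S U : cantor -> Prop) : Prop :=
  forall x, S x -> U x -> exists n, forall z, S z -> agree n x z -> U z.

Definition continuous_on (S T : cantor -> Prop) (f : cantor -> cantor) : Prop :=
  (forall x, S x -> T (f x)) /\
  (forall U, rel_open T U -> rel_open S (fun x => U (f x))).

Definition homeomorphism (S : cantor -> Prop) (f g : cantor -> cantor) : Prop :=
  continuous_on S S f /\ continuous_on S S g /\
  (forall x, S x -> g (f x) = x) /\ (forall y, S y -> f (g y) = y).

Definition homogeneous (S : cantor -> Prop) : Prop :=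
  forall x y, S x -> S y -> exists f g, homeomorphism S f g /\ f x = y.

Definition finite_mod (x y : cantor) : Prop :=
  exists N, forall i, N <= i -> x i = y i.

Definition semifilter (S : cantor -> Prop) : Prop :=
  ~ S (fun _ => false) /\
  S (fun _ => true) /\
  (forall x y, S x -> finite_mod x y -> S y) /\
  (forall x y, S x -> (forall i, x i = true -> y i = true) -> S y).

(* Main.v *)
Require Import Defs.
From Stdlib Require Import Arith Lia Bool Classical FunctionalExtensionality.

Fixpoint agreeb (i : nat) (x z : cantor) : bool :=
  match i with
  | 0 => true
  | S k => agreeb k x z && Bool.eqb (x k) (z k)
  end.

Definition hm (x y z : cantor) : cantor := fun i =>
  if agreeb i x z then xorb (z i) (xorb (x i) (y i)) else z i.

Lemma agreeb_h x y z i : agreeb i y (hm x y z) = agreeb i x z.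
Proof.
  induction i as [|i IH]; simpl; auto.
  rewrite IH. unfold hm.
  destruct (agreeb i x z); simpl; auto.
  destruct (x i), (y i), (z i); reflexivity.
Qed.

Lemma hK x y z : hm y x (hm x y z) = z.
Proof.
  apply functional_extensionality; intro i. unfold hm at 1.
  rewrite agreeb_h. unfold hm.
  destruct (agreeb i x z); auto.
  destruct (x i), (y i), (z i); reflexivity.
Qed.

Lemma agreeb_true i x z : (forall j, j < i -> x j = z j) -> agreeb i x z = true.
Proof.
  induction i as [|i IH]; simpl; intros H; auto.
  rewrite IH by (intros; apply H; lia). rewrite (H i) by lia.
  destruct (z i); reflexivity.
Qed.

Lemma agreeb_false i x z n : n < i -> x n <> z n -> agreeb i x z = false.
Proof.
  induction i as [|i IH]; simpl; intros Hn Hd; [lia|].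
  destruct (Nat.eq_dec n i) as [->|Hne].
  - destruct (x i), (z i); simpl; try congruence; apply andb_false_r.
  - rewrite IH by (auto; lia). reflexivity.
Qed.

Lemma agreeb_local i x z w : agree i z w -> agreeb i x z = agreeb i x w.
Proof.
  induction i as [|i IH]; simpl; intros H; auto.
  rewrite IH by (intros j Hj; apply H; lia). rewrite (H i) by lia. auto.
Qed.

Lemma hx x y : hm x y x = y.
Proof.
  apply functional_extensionality; intro i. unfold hm.
  rewrite agreeb_true by auto. destruct (x i), (y i); reflexivity.
Qed.

Lemma h_in S x y z : semifilter S -> S x -> S y -> S z -> S (hm x y z).
Proof.
  intros [_ [_ [Hf _]]] Sx Sy Sz.
  destruct (classic (forall n, x n = z n)) as [Hall|Hn].
  - apply (Hf y); auto. exists 0. intros i _. unfold hm.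
    rewrite agreeb_true by auto. rewrite <- (Hall i).
    destruct (x i), (y i); reflexivity.
  - apply not_all_ex_not in Hn. destruct Hn as [n Hn].
    apply (Hf z); auto. exists (Datatypes.S n). intros i Hi. unfold hm.
    rewrite (agreeb_false i x z n ltac:(lia) Hn). reflexivity.
Qed.

Lemma h_cont S x y : semifilter S -> S x -> S y -> continuous_on S S (hm x y).
Proof.
  intros HS Sx Sy. split.
  - intros z Sz. apply h_in; auto.
  - intros U HU x0 Sx0 Ux0.
    destruct (HU (hm x y x0) (h_in S x y x0 HS Sx Sy Sx0) Ux0) as [n Hn].
    exists n. intros z Sz Hag. apply Hn. apply h_in; auto.
    intros i Hi. unfold hm.
    rewrite (agreeb_local i x x0 z) by (intros j Hj; apply Hag; lia).
    rewrite (Hag i Hi). reflexivity.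
Qed.

Theorem corollary4p3 (S : cantor -> Prop) :
  semifilter S -> homogeneous S.
Proof.
  intros HS x y Sx Sy. exists (hm x y), (hm y x).
  split; [|apply hx].
  split; [apply h_cont; auto|].
  split; [apply h_cont; auto|].
  split; intros; apply hK.
Qed.
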